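(* Let $T:\mathbb{R}^d\to\mathbb{R}^d$ be nonexpansive with respect to a norm $\|\cdot\|$ on $\mathbb{R}^d$, with $\operatorname{Fix}T\neq\emptyset$. Let $(\beta_n)_{n\ge1}\subseteq(0,1)$ be nondecreasing with $\lim_n\beta_n=1$, let $x^0\in\mathbb{R}^d$, and let $(x^n)_{n\ge1}$ be generated by $$x^n=(1-\beta_n)x^0+\beta_n\bigl(Tx^{n-1}+U_n\bigr),\qquad n\ge1,$$ where $(U_n)_{n\ge1}$ are random vectors in $\mathbb{R}^d$ with $\mathbb{E}(U_n)=0$ and $\sigma_n:=\mathbb{E}(\|U_n\|)<\infty$. Assume there is $\bar\kappa\ge0$ with $\sup_{n\ge0}\mathbb{E}(\|Tx^n-x^0\|)\le\bar\kappa$. Then for all $n\ge1$, $$\mathbb{E}(\|x^n-Tx^n\|)\le\bar\kappa(1-\beta_n)+\sum_{i=1}^n B_i^n\bigl(\bar\kappa(\beta_i-\beta_{i-1})+\beta_i\sigma_i+\beta_{i-1}\sigma_{i-1}\bigr)+\beta_n\sigma_n.$$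
   Context: Notation: $B_i^n:=\prod_{j=i}^n\beta_j$, with the conventions $\sigma_0=\beta_0=0$ and $B_i^n=1$ if $i>n\ge0$. $\operatorname{Fix}T$ denotes the set of fixed points of $T$. *)

(* Defs.v *)
From HB Require Import structures.
From mathcomp Require Import all_boot all_order all_algebra.
From mathcomp Require Import all_classical all_reals all_analysis.
Set Implicit Arguments. Unset Strict Implicit. Unset Printing Implicit Defensive.
Import Order.TTheory GRing.Theory Num.Theory.
Import numFieldNormedType.Exports.
Local Open Scope ring_scope.

Definition is_norm (R : realType) (dim : nat) (N : 'rV[R]_dim -> R) : Prop :=
  [/\ forall x, N x = 0 -> x = 0,
      forall (a : R) x, N (a *: x) = `|a| * N x
    & forall x y, N (x + y) <= N x + N y].

Definition nonexpansive (R : realType) (dim : nat) (N : 'rV[R]_dim -> R)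
  (T : 'rV[R]_dim -> 'rV[R]_dim) : Prop :=
  forall x y, N (T x - T y) <= N (x - y).

Definition Fix (R : realType) (dim : nat) (T : 'rV[R]_dim -> 'rV[R]_dim)
  : set 'rV[R]_dim := [set z | T z = z].

Definition random_vector d (Omega : measurableType d) (R : realType) (dim : nat)
  (X : Omega -> 'rV[R]_dim) : Prop :=
  forall i : 'I_dim, measurable_fun setT (fun w => X w ord0 i).

(* Expectation (in \bar R) of a nonnegative real function. *)
Definition Exp d (Omega : measurableType d) (R : realType)
  (P : probability Omega R) (f : Omega -> R) : \bar R :=
  (\int[P]_w (f w)%:E)%E.

Definition mean_zero d (Omega : measurableType d) (R : realType)
  (P : probability Omega R) (dim : nat) (X : Omega -> 'rV[R]_dim) : Prop :=
  forall i : 'I_dim, P.-integrable setT (fun w => (X w ord0 i)%:E) /\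
    (\int[P]_w (X w ord0 i)%:E = 0)%E.

Definition sigma d (Omega : measurableType d) (R : realType)
  (P : probability Omega R) (dim : nat) (N : 'rV[R]_dim -> R)
  (U : nat -> Omega -> 'rV[R]_dim) (n : nat) : R :=
  if n is 0 then 0 else fine (Exp P (fun w => N (U n w))).

(* B_i^n := prod_{j=i}^n beta_j  (= 1 if i > n) *)
Definition Bprod (R : realType) (beta : nat -> R) (i n : nat) : R :=
  \prod_(i <= j < n.+1) beta j.

(* Main.v *)
Require Import Defs.
From HB Require Import structures.
From mathcomp Require Import all_boot all_order all_algebra.
From mathcomp Require Import all_classical all_reals all_analysis.
From mathcomp Require Import ring lra.
Import Order.TTheory GRing.Theory Num.Theory.
Import numFieldNormedType.Exports.
Local Open Scope ring_scope.
Local Open Scope classical_set_scope.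

Section NormFacts.
Variables (R : realType) (dim : nat) (N : 'rV[R]_dim -> R).
Hypothesis hN : is_norm N.

Lemma N0 : N 0 = 0.
Proof. case: hN => _ hZ _; by rewrite -(scale0r (0:'rV[R]_dim)) hZ normr0 mul0r. Qed.

Lemma NN x : N (- x) = N x.
Proof. case: hN => _ hZ _; by rewrite -scaleN1r hZ normrN normr1 mul1r. Qed.

Lemma Nge0 x : 0 <= N x.
Proof.
case: hN => _ _ hT; have := hT x (- x); rewrite subrr N0 NN; lra.
Qed.

Lemma Nsub u v : `|N u - N v| <= N (u - v).
Proof.
case: hN => _ _ hT; rewrite ler_norml; apply/andP; split.
  have := hT (v - u) u; rewrite subrK -opprB NN; lra.
have := hT (u - v) v; rewrite subrK; lra.
Qed.

Lemma Nsum (I : Type) (r : seq I) (F : I -> 'rV[R]_dim) :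
  N (\sum_(i <- r) F i) <= \sum_(i <- r) N (F i).
Proof.
case: hN => _ _ hT; elim: r => [|a r IH]; first by rewrite !big_nil N0.
rewrite !big_cons; apply: le_trans (hT _ _) _; exact: lerD.
Qed.

Definition S1 (v : 'rV[R]_dim) := \sum_i `|v ord0 i|.

Lemma S1_ge0 v : 0 <= S1 v.
Proof. by apply: sumr_ge0 => i _. Qed.

Lemma Nup : exists K, 0 <= K /\ forall v, N v <= K * S1 v.
Proof.
case: hN => _ hZ _.
exists (\sum_j N 'e_j); split; first by apply: sumr_ge0 => j _; exact: Nge0.
move=> v; rewrite {1}(row_sum_delta v); apply: le_trans (Nsum _ _ _) _.
rewrite /S1 mulr_sumr; apply: ler_sum => i _; rewrite hZ [leRHS]mulrC.
apply: ler_wpM2l; first exact: normr_ge0.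
rewrite (bigD1 i) //= lerDl; apply: sumr_ge0 => j _; exact: Nge0.
Qed.

Lemma coord_le (v : 'rV[R]_dim) i : `|v ord0 i| <= `|v|.
Proof.
have /mapP[j Hj ->] : `|v ord0 i| \in [seq `|v x.1 x.2| | x : 'I_1 * 'I_dim].
  by apply/mapP; exists (ord0, i) => //=; rewrite mem_enum.
by rewrite [leRHS]/Num.norm /= mx_normrE; apply/bigmax_geP; right => /=; exists j.
Qed.

Lemma S1_le v : S1 v <= dim%:R * `|v|.
Proof.
rewrite /S1; apply: le_trans (ler_sum _ (fun i _ => coord_le v i)) _.
by rewrite sumr_const card_ord mulr_natl.
Qed.

Lemma N_continuous : continuous N.
Proof.
have [K [K0 hK]] := Nup.
move=> v; have FF : Filter (nbhs v) by exact: nbhs_filter.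
apply/cvgrPdist_lt => e e0.
have hd : 0 < e / (K * dim%:R + 1).
  by apply: divr_gt0 => //; apply: ltr_wpDl => //; apply: mulr_ge0.
near=> t.
apply: le_lt_trans (Nsub _ _) _.
apply: le_lt_trans (hK _) _.
apply: le_lt_trans (ler_wpM2l K0 (S1_le _)) _.
have ht : `|v - t| < e / (K * dim%:R + 1).
  near: t; apply: (@cvgr_dist_lt _ _ _ (nbhs v) _ id v) => //.
have hp : 0 < K * dim%:R + 1 by apply: ltr_wpDl => //; apply: mulr_ge0.
rewrite ltr_pdivlMr // in ht.
apply: le_lt_trans ht; have := normr_ge0 (v - t); have := K0; set a := `|v - t|; set b := K; set c := (dim%:R : R); have : 0 <= c by []; nra.
Unshelve. all: end_near.
Qed.


Lemma Nlow : exists c, 0 < c /\ forall (v : 'rV[R]_dim) i, c * `|v ord0 i| <= N v.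
Proof.
have [dim0|dimpos] := posnP dim.
  by exists 1; split => // v [k hk]; exfalso; move: hk; rewrite dim0.
pose S := [set v : 'rV[R]_dim | `|v| = 1]%classic.
have v1 : (const_mx 1 : 'rV[R]_dim) != 0.
  apply/eqP => /matrixP /(_ ord0 (Ordinal dimpos)); rewrite !mxE => /eqP.
  by rewrite oner_eq0.
have nv1 : 0 < `|(const_mx 1 : 'rV[R]_dim)| by rewrite normr_gt0.
have S0 : S !=set0.
  exists (`|(const_mx 1 : 'rV[R]_dim)|^-1 *: const_mx 1); rewrite /S /=.
  by rewrite normrZ normfV normr_id mulVf // gt_eqF.
have cS : compact S.
  apply: bounded_closed_compact.
    exists 1; split => // M /ltW M1 x /= ->; exact: M1.
  have -> : S = ((Num.norm) @^-1` [set x : R | x = 1])%classic by [].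
  apply: preimage_closed; last exact: closed_eq.
  by move=> x _; exact: norm_continuous.
have [c0 c0S hmin] := EVT_min_rV S0 cS (continuous_subspaceT (N_continuous)).
move: c0S; rewrite inE /S /= => c01.
have c0n : c0 != 0 by apply/eqP => c00; move: c01; rewrite c00 normr0 => /eqP; rewrite eq_sym oner_eq0.
have Nc0 : 0 < N c0.
  rewrite lt_neqAle Nge0 // andbT; apply/eqP => /esym h; case: hN => h0 _ _.
  by move: c0n; rewrite (h0 _ h) eqxx.
exists (N c0); split => // v i.
have [->|vn] := eqVneq v 0.
  by rewrite mxE normr0 mulr0 N0.
have nv : 0 < `|v| by rewrite normr_gt0.
have : N c0 <= N (`|v|^-1 *: v).
  apply: hmin; rewrite inE /S /= normrZ normfV normr_id mulVf // gt_eqF //.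
case: hN => _ hZ _; rewrite hZ normfV normr_id ler_pdivlMl // => h.
apply: le_trans h; rewrite mulrC ler_wpM2r //; [exact: ltW | exact: coord_le].
Qed.

End NormFacts.
Arguments S1 {R dim}.

Lemma S1_tri (R : realType) dim (u v w : 'rV[R]_dim) :
  S1 (u - w) <= S1 (u - v) + S1 (v - w).
Proof.
rewrite /S1 -big_split /=; apply: ler_sum => i _; rewrite !mxE.
exact: ler_distD.
Qed.

Lemma S1_sym (R : realType) dim (u v : 'rV[R]_dim) : S1 (u - v) = S1 (v - u).
Proof. by rewrite /S1; apply: eq_bigr => i _; rewrite !mxE distrC. Qed.

Arguments S1_tri {R dim}.
Arguments S1_sym {R dim}.
Arguments S1_ge0 {R dim}.

Lemma meas_S1 d (Omega : measurableType d) (R : realType) dim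
  (X : Omega -> 'rV[R]_dim) (q : 'rV[R]_dim) :
  (forall i, measurable_fun setT (fun w => X w ord0 i)) ->
  measurable_fun setT (fun w => S1 (X w - q)).
Proof.
move=> mX; rewrite /S1; apply: measurable_sum => i.
under eq_fun do rewrite !mxE.
apply: measurableT_comp => //; apply: measurable_realfun.measurable_funB => //.
Qed.

Lemma meas_comp d (Omega : measurableType d) (R : realType) dim
  (X : Omega -> 'rV[R]_dim) (f : 'rV[R]_dim -> R) (L : R) :
  (forall i, measurable_fun setT (fun w => X w ord0 i)) ->
  (forall u v, `|f u - f v| <= L * S1 (u - v)) ->
  measurable_fun setT (f \o X).
Proof.
move=> mX hf.
apply: (measurability _ (measurable_realfun.RGenOpens.measurableE R)).
move=> _ [_ [a [b ->]] <-].
pose F (p : ('rV[rat]_dim * rat)%type) := [set w : Omega |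
  (forall u, S1 (u - map_mx ratr p.1) < ratr p.2 -> f u \in `]a, b[%R) /\
  S1 (X w - map_mx ratr p.1) < ratr p.2].
have -> : setT `&` (f \o X) @^-1` `]a, b[ = \bigcup_p F p.
  apply/seteqP; split => w /=; last first.
    by case=> p _ [hp hw]; split => //; exact: hp.
  case=> _; rewrite in_itv /= => /andP[aw wb].
  set y := f (X w) in aw wb.
  pose del := Num.min (y - a) (b - y).
  have del0 : 0 < del by rewrite lt_min !subr_gt0 aw wb.
  have dela : del <= y - a by rewrite ge_min lexx.
  have delb : del <= b - y by rewrite ge_min lexx orbT.
  have L1 : 0 < `|L| + 1 by rewrite ltr_wpDl.
  pose eps := del / (`|L| + 1).
  have eps0 : 0 < eps by apply: divr_gt0.
  have epsL : `|L| * eps < del.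
    rewrite /eps mulrA ltr_pdivrMr //; have := normr_ge0 L; nra.
  have e2 : 0 < eps / 2 by apply: divr_gt0.
  have [r] := @rat_in_itvoo R 0 (eps / 2) e2.
  rewrite in_itv /= => /andP[r0 reps].
  have D1 : 0 < dim%:R + 1 :> R by rewrite ltr_wpDl.
  pose rho : R := ratr r / (dim%:R + 1).
  have rho0 : 0 < rho by apply: divr_gt0.
  have hq : forall i : 'I_dim, exists q : rat, `|X w ord0 i - ratr q| < rho.
    move=> i; have hh : X w ord0 i - rho < X w ord0 i + rho by lra.
    have [q] := @rat_in_itvoo R (X w ord0 i - rho) (X w ord0 i + rho) hh.
    rewrite in_itv /= => /andP[q1 q2]; exists q; rewrite ltr_norml; apply/andP; split; lra.
  have [g hg] := fin_all_exists hq.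
  have hS : S1 (X w - map_mx ratr (\row_i g i)) < ratr r.
    rewrite /S1.
    apply: (@le_lt_trans _ _ (\sum_(i < dim) rho)).
      apply: ler_sum => i _; rewrite !mxE; exact: ltW.
    rewrite sumr_const card_ord -mulr_natl.
    have -> : dim%:R * rho = dim%:R * ratr r / (dim%:R + 1) by rewrite /rho mulrA.
    rewrite ltr_pdivrMr //; nra.
  exists (\row_i g i, r) => //=; split => // u hu.
  have hu2 : S1 (u - X w) < ratr r + ratr r.
    apply: le_lt_trans (S1_tri _ (map_mx ratr (\row_i g i)) _) _.
    by rewrite (S1_sym (map_mx _ _)); apply: ltrD.
  have hfu := hf u (X w).
  have hS0 := S1_ge0 (u - X w).
  have hLS : L * S1 (u - X w) <= `|L| * S1 (u - X w).
    by apply: ler_wpM2r => //; exact: ler_norm.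
  have hLe : `|L| * S1 (u - X w) <= `|L| * eps.
    by apply: ler_wpM2l => //; lra.
  move: hfu; rewrite -/y ler_norml => /andP[h1 h2].
  rewrite in_itv /=; apply/andP; split; lra.
apply: countable_bigcupT_measurable; first exact: countableP.
move=> p; have [h|h] := pselect (forall u, S1 (u - map_mx ratr p.1) < ratr p.2 -> f u \in `]a, b[%R).
  have -> : F p = setT `&` (fun w => S1 (X w - map_mx ratr p.1)) @^-1` `]-oo, ratr p.2[.
    apply/seteqP; split => w /=.
      by case=> _ hw; split => //; rewrite in_itv /=.
    by case=> _; rewrite in_itv /= => hw; split.
  by apply: meas_S1 => //; exact: measurable_itv.
have -> : F p = set0 by apply/seteqP; split => w //= [].
exact: measurable0.
Qed.

Local Close Scope classical_set_scope.

Section Expect.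
Variables (d : measure_display) (Omega : measurableType d) (R : realType)
  (P : probability Omega R).

Lemma Emono (f g : Omega -> R) : (forall w, 0 <= f w) ->
  measurable_fun setT f -> measurable_fun setT g -> (forall w, f w <= g w) ->
  (Exp P f <= Exp P g)%E.
Proof.
move=> f0 mf mg fg; apply: ge0_le_integral => //.
- by move=> w _; rewrite lee_fin.
- exact/measurable_realfun.measurable_EFinP.
- exact/measurable_realfun.measurable_EFinP.
- by move=> w _; rewrite lee_fin.
Qed.

Lemma Eadd (f g : Omega -> R) : (forall w, 0 <= f w) -> (forall w, 0 <= g w) ->
  measurable_fun setT f -> measurable_fun setT g ->
  Exp P (fun w => f w + g w) = (Exp P f + Exp P g)%E.
Proof.
move=> f0 g0 mf mg; rewrite /Exp.
have -> : (fun w => (f w + g w)%:E) = (fun w => (f w)%:E + (g w)%:E)%E.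
  by apply/funext => w; rewrite EFinD.
apply: ge0_integralD => //.
- by move=> w _; rewrite lee_fin.
- exact/measurable_realfun.measurable_EFinP.
- by move=> w _; rewrite lee_fin.
- exact/measurable_realfun.measurable_EFinP.
Qed.

Lemma EZ (a : R) (f : Omega -> R) : 0 <= a -> (forall w, 0 <= f w) ->
  measurable_fun setT f ->
  Exp P (fun w => a * f w) = (a%:E * Exp P f)%E.
Proof.
move=> a0 f0 mf; rewrite /Exp.
have -> : (fun w => (a * f w)%:E) = (fun w => a%:E * (f w)%:E)%E.
  by apply/funext => w; rewrite EFinM.
apply: ge0_integralZl_EFin => //.
- by move=> w _; rewrite lee_fin.
- exact/measurable_realfun.measurable_EFinP.
Qed.

Lemma Ege0 (f : Omega -> R) : (forall w, 0 <= f w) -> (0 <= Exp P f)%E.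
Proof. by move=> f0; apply: integral_ge0 => w _; rewrite lee_fin. Qed.

Lemma mZ (a : R) (f : Omega -> R) : measurable_fun setT f ->
  measurable_fun setT (fun w => a * f w).
Proof. by move=> mf; apply: measurable_realfun.measurable_funM. Qed.

Lemma mDD (f g : Omega -> R) : measurable_fun setT f -> measurable_fun setT g ->
  measurable_fun setT (fun w => f w + g w).
Proof. by move=> mf mg; apply: measurable_realfun.measurable_funD. Qed.

Lemma E2 a1 a2 (f1 f2 : Omega -> R) : 0 <= a1 -> 0 <= a2 ->
  (forall w, 0 <= f1 w) -> (forall w, 0 <= f2 w) ->
  measurable_fun setT f1 -> measurable_fun setT f2 ->
  Exp P (fun w => a1 * f1 w + a2 * f2 w) =
  (a1%:E * Exp P f1 + a2%:E * Exp P f2)%E.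
Proof.
move=> a10 a20 f10 f20 m1 m2.
rewrite (Eadd (fun w => a1 * f1 w) (fun w => a2 * f2 w)) ?EZ //;
  by [move=> w; apply: mulr_ge0 | apply: mZ].
Qed.

Lemma E3 a1 a2 a3 (f1 f2 f3 : Omega -> R) : 0 <= a1 -> 0 <= a2 -> 0 <= a3 ->
  (forall w, 0 <= f1 w) -> (forall w, 0 <= f2 w) -> (forall w, 0 <= f3 w) ->
  measurable_fun setT f1 -> measurable_fun setT f2 -> measurable_fun setT f3 ->
  Exp P (fun w => a1 * f1 w + a2 * f2 w + a3 * f3 w) =
  (a1%:E * Exp P f1 + a2%:E * Exp P f2 + a3%:E * Exp P f3)%E.
Proof.
move=> a10 a20 a30 f10 f20 f30 m1 m2 m3.
rewrite (Eadd (fun w => a1 * f1 w + a2 * f2 w) (fun w => a3 * f3 w)) ?E2 ?EZ //.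
- by move=> w; apply: addr_ge0; apply: mulr_ge0.
- by move=> w; apply: mulr_ge0.
- by apply: mDD; apply: mZ.
- exact: mZ.
Qed.

Lemma E4 a1 a2 a3 a4 (f1 f2 f3 f4 : Omega -> R) :
  0 <= a1 -> 0 <= a2 -> 0 <= a3 -> 0 <= a4 ->
  (forall w, 0 <= f1 w) -> (forall w, 0 <= f2 w) -> (forall w, 0 <= f3 w) ->
  (forall w, 0 <= f4 w) ->
  measurable_fun setT f1 -> measurable_fun setT f2 -> measurable_fun setT f3 ->
  measurable_fun setT f4 ->
  Exp P (fun w => a1 * f1 w + a2 * f2 w + a3 * f3 w + a4 * f4 w) =
  (a1%:E * Exp P f1 + a2%:E * Exp P f2 + a3%:E * Exp P f3 + a4%:E * Exp P f4)%E.
Proof.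
move=> a10 a20 a30 a40 f10 f20 f30 f40 m1 m2 m3 m4.
rewrite (Eadd (fun w => a1 * f1 w + a2 * f2 w + a3 * f3 w) (fun w => a4 * f4 w)) ?E3 ?EZ //.
- by move=> w; apply: addr_ge0; [apply: addr_ge0|]; apply: mulr_ge0.
- by move=> w; apply: mulr_ge0.
- by apply: mDD; [apply: mDD|]; apply: mZ.
- exact: mZ.
Qed.

End Expect.

Lemma N4 (R : realType) dim (N : 'rV[R]_dim -> R) : is_norm N ->
  forall (a b e f : R) p q r s, 0 <= a -> 0 <= b -> 0 <= e -> 0 <= f ->
  N (a *: p + b *: q + e *: r + f *: s) <= a * N p + b * N q + e * N r + f * N s.
Proof.
move=> hN a b e f p q r s a0 b0 e0 f0; have hN' := hN; case: hN' => _ hZ hT.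
apply: le_trans (hT _ _) _; apply: lerD; last by rewrite hZ ger0_norm.
apply: le_trans (hT _ _) _; apply: lerD; last by rewrite hZ ger0_norm.
apply: le_trans (hT _ _) _; apply: lerD; by rewrite hZ ger0_norm.
Qed.

Theorem proposition1 (R : realType) (dim : nat) (N : 'rV[R]_dim -> R)
  (T : 'rV[R]_dim -> 'rV[R]_dim)
  (d : measure_display) (Omega : measurableType d) (P : probability Omega R)
  (beta : nat -> R) (x0 : 'rV[R]_dim)
  (U : nat -> Omega -> 'rV[R]_dim) (x : nat -> Omega -> 'rV[R]_dim)
  (kappa : R) :
  is_norm N ->
  nonexpansive N T ->
  (Fix T !=set0)%classic ->
  beta 0%N = 0 ->
  (forall n, (1 <= n)%N -> 0 < beta n < 1) ->
  (forall n m, (1 <= n)%N -> (n <= m)%N -> beta n <= beta m) ->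
  (beta @ \oo --> (1 : R))%classic ->
  (forall n, (1 <= n)%N -> random_vector (U n)) ->
  (forall n, (1 <= n)%N -> mean_zero P (U n)) ->
  (forall n, (1 <= n)%N -> (Exp P (fun w => N (U n w)) < +oo)%E) ->
  (forall w, x 0%N w = x0) ->
  (forall n w, (1 <= n)%N ->
     x n w = (1 - beta n) *: x0 + beta n *: (T (x n.-1 w) + U n w)) ->
  0 <= kappa ->
  (forall n, (Exp P (fun w => N (T (x n w) - x0)%R) <= kappa%:E)%E) ->
  forall n, (1 <= n)%N ->
    (Exp P (fun w => N (x n w - T (x n w))%R) <=
      (kappa * (1 - beta n)
       + \sum_(1 <= i < n.+1) Bprod beta i n *
           (kappa * (beta i - beta i.-1) + beta i * sigma P N U i
            + beta i.-1 * sigma P N U i.-1)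
       + beta n * sigma P N U n)%:E)%E.
Proof.
move=> hN hT _ b0 hb hmono _ mU mean fin hx0 hrec k0 hk n n1.
have [K [K0 hK]] := @Nup _ _ _ hN.
have [c [c0 hc]] := @Nlow _ _ _ hN.
have Nge := @Nge0 _ _ _ hN.
have NNeg := @NN _ _ _ hN.
have hN' := hN; case: hN' => hN0 hZ hTr.
have mlip : forall (f : 'rV[R]_dim -> R) (L : R) (X : Omega -> 'rV[R]_dim),
    0 <= L -> (forall u v, `|f u - f v| <= L * N (u - v)) ->
    (forall i, measurable_fun setT (fun w => X w ord0 i)) ->
    measurable_fun setT (fun w => f (X w)).
  move=> f L X L0 hf mX.
  have := @meas_comp _ _ _ _ X f (L * K) mX; apply => u v.
  apply: le_trans (hf u v) _; rewrite -mulrA; apply: ler_wpM2l => //.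
have Tco : forall u v j, `|T u ord0 j - T v ord0 j| <= c^-1 * N (u - v).
  move=> u v j; rewrite ler_pdivlMl //.
  apply: le_trans (hT u v); have := hc (T u - T v) j; by rewrite !mxE.
have mx : forall m i, measurable_fun setT (fun w => x m w ord0 i).
  elim=> [|m IH] i.
    have -> : (fun w => x 0%N w ord0 i) = (fun=> x0 ord0 i).
      by apply/funext => w; rewrite hx0.
    exact: measurable_cst.
  have -> : (fun w => x m.+1 w ord0 i) = (fun w => (1 - beta m.+1) * x0 ord0 i
      + beta m.+1 * (T (x m w) ord0 i + U m.+1 w ord0 i)).
    by apply/funext => w; rewrite hrec // !mxE.
  apply: measurable_realfun.measurable_funD => //.
  apply: measurable_realfun.measurable_funM => //.
  apply: measurable_realfun.measurable_funD => //.
    apply: (mlip (fun v => T v ord0 i) c^-1 (x m)) => //.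
    by rewrite invr_ge0 ltW.
  exact: mU.
have mA : forall m, measurable_fun setT (fun w => N (x m w - T (x m w))).
  move=> m; apply: (mlip (fun v => N (v - T v)) 2 (x m)) => // u v.
  apply: le_trans (@Nsub _ _ _ hN _ _) _.
  have -> : u - T u - (v - T v) = (u - v) + (T v - T u).
    by apply/rowP => j; rewrite !mxE; ring.
  apply: le_trans (hTr _ _) _.
  have h := hT v u; rewrite (_ : v - u = -(u - v)) ?NNeg in h; [lra | by rewrite opprB].
have mB : forall m, measurable_fun setT (fun w => N (T (x m w) - x0)).
  move=> m; apply: (mlip (fun v => N (T v - x0)) 1 (x m)) => // u v.
  apply: le_trans (@Nsub _ _ _ hN _ _) _.
  rewrite opprB addrA subrK mul1r; exact: hT.
have NL : forall u v, `|N u - N v| <= 1 * N (u - v).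
  by move=> u v; rewrite mul1r; exact: (@Nsub _ _ _ hN).
have mC : forall m, (1 <= m)%N -> measurable_fun setT (fun w => N (U m w)).
  move=> m m1; exact: (mlip N 1 (U m) ler01 NL (mU m m1)).
have mD : forall m, measurable_fun setT (fun w => N (x m w - x m.-1 w)).
  move=> m.
  have mco : forall i, measurable_fun setT (fun w => (x m w - x m.-1 w) ord0 i).
    move=> i; have -> : (fun w => (x m w - x m.-1 w) ord0 i) = (fun w => x m w ord0 i - x m.-1 w ord0 i).
      by apply/funext => w; rewrite !mxE.
    exact: measurable_realfun.measurable_funB.
  exact: (mlip N 1 _ ler01 NL mco).
pose sg i := sigma P N U i.
have hsig : forall i, (1 <= i)%N -> Exp P (fun w => N (U i w)) = (sg i)%:E.
  move=> [//|i] i1; rewrite /sg /sigma fineK // ge0_fin_numE; first exact: fin.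
  by apply: Ege0.
have sg0 : forall i, 0 <= sg i.
  by move=> [|i]; [rewrite /sg /sigma | apply: fine_ge0; apply: Ege0].
have hb0 : forall m, 0 <= beta m.
  by move=> [|m]; [rewrite b0 | have /andP[/ltW] := hb m.+1 isT].
have hdb : forall m, 0 <= beta m.+1 - beta m.
  move=> [|m]; first by rewrite b0 subr0.
  by rewrite subr_ge0; apply: hmono.
pose a m := Exp P (fun w => N (x m w - x m.-1 w)).
pose cc i := kappa * (beta i - beta i.-1) + beta i * sg i + beta i.-1 * sg i.-1.
have base : (a 1%N <= (cc 1%N)%:E)%E.
  have pw1 : forall w, N (x 1%N w - x 0%N w) <=
      beta 1%N * N (T (x 0%N w) - x0) + beta 1%N * N (U 1%N w).
    move=> w; have e1 : x 1%N w = (1 - beta 1%N) *: x0 + beta 1%N *: (T (x 0%N w) + U 1%N w).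
      exact: hrec.
    have -> : x 1%N w - x 0%N w = beta 1%N *: (T (x 0%N w) - x0) + beta 1%N *: U 1%N w.
      rewrite e1; set T0 := T (x 0%N w); rewrite hx0; apply/rowP => j; rewrite !mxE; ring.
    by apply: le_trans (hTr _ _) _; rewrite !hZ !ger0_norm.
  rewrite /a /=.
  apply: (le_trans (@Emono _ _ _ P _ _ (fun w => Nge _) (mD 1%N) _ pw1)).
    by apply: mDD; apply: mZ; [exact: mB | exact: (mC 1%N isT)].
  rewrite (@E2 _ _ _ P _ _ (fun w => N (T (x 0%N w) - x0)) (fun w => N (U 1%N w))
    (hb0 _) (hb0 _) (fun w => Nge _) (fun w => Nge _) (mB 0%N) (mC 1%N isT)).
  rewrite hsig //.
  have -> : (cc 1%N)%:E = ((beta 1%N)%:E * kappa%:E + (beta 1%N)%:E * (sg 1%N)%:E)%E.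
    by rewrite -!EFinM -EFinD /cc /= b0; congr EFin; ring.
  apply: leeD; last exact: lexx.
  by apply: lee_wpmul2l; [rewrite lee_fin; exact: hb0 | exact: hk].
have step : forall m s, (1 <= m)%N -> (a m <= s%:E)%E ->
    (a m.+1 <= (cc m.+1 + beta m * s)%:E)%E.
  move=> m s m1 ha.
  have pw : forall w, N (x m.+1 w - x m w) <=
      (beta m.+1 - beta m) * N (T (x m w) - x0) + beta m * N (x m w - x m.-1 w)
      + beta m.+1 * N (U m.+1 w) + beta m * N (U m w).
    move=> w.
    have e1 : x m.+1 w = (1 - beta m.+1) *: x0 + beta m.+1 *: (T (x m w) + U m.+1 w).
      exact: hrec.
    have e2 := hrec m w m1.
    have -> : x m.+1 w - x m w = (beta m.+1 - beta m) *: (T (x m w) - x0)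
        + beta m *: (T (x m w) - T (x m.-1 w)) + beta m.+1 *: U m.+1 w
        + beta m *: (- U m w).
      rewrite e1; set Tm := T (x m w); rewrite e2; apply/rowP => j; rewrite !mxE; ring.
    have h4 := @N4 _ _ _ hN (beta m.+1 - beta m) (beta m) (beta m.+1) (beta m)
      (T (x m w) - x0) (T (x m w) - T (x m.-1 w)) (U m.+1 w) (- U m w)
      (hdb m) (hb0 m) (hb0 _) (hb0 m).
    apply: le_trans h4 _.
    rewrite NNeg; apply: lerD => //; apply: lerD => //; apply: lerD => //.
    by apply: ler_wpM2l => //; exact: hT.
  rewrite /a /=.
  apply: (le_trans (@Emono _ _ _ P _ _ (fun w => Nge _) (mD m.+1) _ pw)).
    by apply: mDD; [apply: mDD; [apply: mDD|]|]; apply: mZ;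
      [exact: mB | exact: mD | exact: (mC m.+1 isT) | exact: (mC m m1)].
  rewrite (@E4 _ _ _ P _ _ _ _ (fun w => N (T (x m w) - x0))
    (fun w => N (x m w - x m.-1 w)) (fun w => N (U m.+1 w)) (fun w => N (U m w))
    (hdb m) (hb0 m) (hb0 _) (hb0 m) (fun w => Nge _) (fun w => Nge _)
    (fun w => Nge _) (fun w => Nge _) (mB m) (mD m) (mC m.+1 isT) (mC m m1)).
  rewrite hsig // hsig //.
  have -> : (cc m.+1 + beta m * s)%:E = ((beta m.+1 - beta m)%:E * kappa%:E
      + (beta m)%:E * s%:E + (beta m.+1)%:E * (sg m.+1)%:E
      + (beta m)%:E * (sg m)%:E)%E.
    by rewrite -!EFinM -!EFinD /cc /=; congr EFin; ring.
  apply: leeD; last exact: lexx.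
  apply: leeD; last exact: lexx.
  apply: leeD.
    by apply: lee_wpmul2l; [rewrite lee_fin; exact: hdb | exact: hk].
  by apply: lee_wpmul2l; [rewrite lee_fin; exact: hb0 | exact: ha].
pose S m := \sum_(1 <= i < m.+1) Bprod beta i m.-1 * cc i.
have Srec : forall m, S m.+1 = cc m.+1 + beta m * S m.
  move=> m; rewrite /S big_nat_recr //= /Bprod (big_geq (leqnn m.+1)) mul1r addrC.
  congr (_ + _); rewrite mulr_sumr; apply: eq_big_nat => i /andP[i1 im].
  case: m im => [|m] im; first by move: i1 im; case: i => [|[|i]].
  rewrite (@big_nat_recr _ _ _ m.+1 i _ im) /=; ring.
have ind : forall m, (1 <= m)%N -> (a m <= (S m)%:E)%E.
  elim=> [//|m IH] _.
  case: m IH => [|m] IH.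
    have -> : S 1%N = cc 1%N by rewrite /S big_nat1 /Bprod big_geq // mul1r.
    exact: base.
  rewrite Srec; exact: step (IH isT).
have pwf : forall w, N (x n w - T (x n w)) <=
    (1 - beta n) * N (T (x n w) - x0) + beta n * N (x n w - x n.-1 w)
    + beta n * N (U n w).
  move=> w.
  have e := hrec n w n1.
  have hbn := hb n n1; move/andP: hbn => [bn0 bn1].
  have b1 : 0 <= 1 - beta n by rewrite subr_ge0 ltW.
  have -> : x n w - T (x n w) = (1 - beta n) *: (- (T (x n w) - x0))
      + beta n *: (T (x n.-1 w) - T (x n w)) + beta n *: U n w.
    set Tn := T (x n w); rewrite {1}e; apply/rowP => j; rewrite !mxE; ring.
  apply: le_trans (hTr _ _) _; apply: lerD; last by rewrite hZ ger0_norm // ltW.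
  apply: le_trans (hTr _ _) _; rewrite !hZ NNeg (ger0_norm b1) (ger0_norm (ltW bn0)).
  apply: lerD => //; apply: ler_wpM2l; first exact: ltW.
  apply: le_trans (hT _ _) _; rewrite -NNeg opprB; exact: lexx.
have hbn := hb n n1; move/andP: hbn => [bn0 bn1].
have b1 : 0 <= 1 - beta n by rewrite subr_ge0 ltW.
apply: (le_trans (@Emono _ _ _ P _ _ (fun w => Nge _) (mA n) _ pwf)).
  by apply: mDD; [apply: mDD|]; apply: mZ;
    [exact: mB | exact: mD | exact: (mC n n1)].
rewrite (@E3 _ _ _ P _ _ _ (fun w => N (T (x n w) - x0))
  (fun w => N (x n w - x n.-1 w)) (fun w => N (U n w))
  b1 (hb0 n) (hb0 n) (fun w => Nge _) (fun w => Nge _) (fun w => Nge _)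
  (mB n) (mD n) (mC n n1)).
rewrite hsig //.
have eqS : \sum_(1 <= i < n.+1) Bprod beta i n *
           (kappa * (beta i - beta i.-1) + beta i * sigma P N U i
            + beta i.-1 * sigma P N U i.-1) = beta n * S n.
  case: n n1 {pwf bn0 bn1 b1} => [//|m] _.
  rewrite /S mulr_sumr; apply: eq_big_nat => i /andP[i1 im].
  rewrite /Bprod (@big_nat_recr _ _ _ m.+1 i _ im) /= /cc /sg; ring.
rewrite eqS.
have -> : (kappa * (1 - beta n) + beta n * S n + beta n * sigma P N U n)%:E =
    ((1 - beta n)%:E * kappa%:E + (beta n)%:E * (S n)%:E + (beta n)%:E * (sg n)%:E)%E.
  by rewrite -!EFinM -!EFinD; congr EFin; rewrite /sg; ring.
apply: leeD; last exact: lexx.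
apply: leeD.
  by apply: lee_wpmul2l; [rewrite lee_fin | exact: hk].
by apply: lee_wpmul2l; [rewrite lee_fin; exact: hb0 | exact: ind].
Qed.
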